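(* Let $(X_m)_{m\in\mathbb Z}$ and $(Y_m)_{m\in\mathbb Z}$ be homogeneous second order recurrence sequences with constant coefficients that possess the same recurrence relation. Let $a,b,c,d,e,m$ be integers with $$\Delta_{xy}:=X_{d-a}Y_{e-b}-X_{e-a}Y_{d-b}\neq 0.$$ Then $$(X_{d-a}Y_{e-b}-X_{e-a}Y_{d-b})X_{m-c}=(X_{d-c}Y_{e-b}-X_{e-c}Y_{d-b})X_{m-a}+(X_{d-a}X_{e-c}-X_{e-a}X_{d-c})Y_{m-b}.$$
   Context: A homogeneous second order recurrence sequence with constant coefficients is a sequence $(X_m)_{m\in\mathbb Z}$ of complex numbers for which there are constants $p,q\in\mathbb C$, $q\neq 0$, with $X_m=pX_{m-1}+qX_{m-2}$ for all $m\in\mathbb Z$. Two such sequences possess the same recurrence relation if they satisfy it with the same constants $p,q$. *)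

(* Defs.v *)
(* Complex numbers are modelled by an arbitrary
   numClosedFieldType C (the MathComp abstraction of C, e.g. algC). *)
From HB Require Import structures.
From mathcomp Require Import all_boot all_order all_algebra.
Set Implicit Arguments. Unset Strict Implicit. Unset Printing Implicit Defensive.
Import Order.TTheory GRing.Theory Num.Theory.
Local Open Scope ring_scope.

Definition satisfies_rec (C : numClosedFieldType) (p q : C) (X : int -> C) : Prop :=
  q != 0 /\ forall m : int, X m = p * X (m - 1) + q * X (m - 2).

(* Main.v *)
Require Import Defs.
From HB Require Import structures.
From mathcomp Require Import all_boot all_order all_algebra.
From mathcomp Require Import ring zify.
Import Order.TTheory GRing.Theory Num.Theory.
Local Open Scope ring_scope.

Lemma shift_rec (C : numClosedFieldType) (p q : C) (X : int -> C) (s : int) :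
  satisfies_rec p q X -> satisfies_rec p q (fun n => X (n - s)).
Proof.
move=> [hq hX]; split => // n /=.
rewrite hX.
have -> : n - s - 1 = n - 1 - s by lia.
have -> : n - s - 2 = n - 2 - s by lia.
by [].
Qed.

Lemma coef (C : numClosedFieldType) (p q : C) (hq : q != 0) (i : int) :
  exists al be : C, forall Z, satisfies_rec p q Z -> Z i = al * Z 0 + be * Z 1.
Proof.
pose P (i : int) := exists al be : C,
  forall Z, satisfies_rec p q Z -> Z i = al * Z 0 + be * Z 1.
have pos : forall n : nat, P n /\ P n.+1.
  elim=> [|n [[a0 [b0 h0]] [a1 [b1 h1]]]].
    split; [exists 1, 0 | exists 0, 1] => Z _; rewrite /=; ring.
  split; first by exists a1, b1.
  exists (p * a1 + q * a0), (p * b1 + q * b0) => Z hZ.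
  have [_ hr] := hZ.
  rewrite hr.
  have -> : (n.+2%:Z - 1) = n.+1%:Z by lia.
  have -> : (n.+2%:Z - 2) = n%:Z by lia.
  rewrite (h1 Z hZ) (h0 Z hZ); ring.
have neg : forall n : nat, P (- n%:Z) /\ P (1 - n%:Z).
  elim=> [|n [[a0 [b0 h0]] [a1 [b1 h1]]]].
    split; [exists 1, 0 | exists 0, 1] => Z _; rewrite /=; ring.
  split; last first.
    exists a0, b0 => Z hZ; have -> : 1 - n.+1%:Z = - n%:Z by lia.
    exact: h0.
  exists (q^-1 * (a1 - p * a0)), (q^-1 * (b1 - p * b0)) => Z hZ.
  have [_ hr] := hZ.
  have := hr (1 - n%:Z).
  have -> : 1 - n%:Z - 1 = - n%:Z by lia.
  have -> : 1 - n%:Z - 2 = - n.+1%:Z by lia.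
  rewrite (h1 Z hZ) (h0 Z hZ) => E.
  have E2 : q * Z (- n.+1%:Z) = (a1 - p * a0) * Z 0 + (b1 - p * b0) * Z 1.
    rewrite -[q * _](addKr (p * (a0 * Z 0 + b0 * Z 1))) -E; ring.
  apply: (mulfI hq); rewrite E2; field.
  exact: hq.
case: i => n.
  exact: (pos n).1.
have := (neg n.+1).1; congr P; lia.
Qed.

Theorem lemma1 (C : numClosedFieldType) (p q : C) (X Y : int -> C)
  (hX : satisfies_rec p q X) (hY : satisfies_rec p q Y)
  (a b c d e m : int)
  (hD : X (d - a) * Y (e - b) - X (e - a) * Y (d - b) != 0) :
  (X (d - a) * Y (e - b) - X (e - a) * Y (d - b)) * X (m - c) =
  (X (d - c) * Y (e - b) - X (e - c) * Y (d - b)) * X (m - a)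
  + (X (d - a) * X (e - c) - X (e - a) * X (d - c)) * Y (m - b).
Proof.
have hq := hX.1.
have h1 := @shift_rec _ _ _ _ c hX; have h2 := @shift_rec _ _ _ _ a hX; have h3 := @shift_rec _ _ _ _ b hY.
have [am [bm Hm]] := @coef _ p q hq m.
have [ad [bd Hd]] := @coef _ p q hq d.
have [ae [be He]] := @coef _ p q hq e.
have := Hm _ h1; have := Hm _ h2; have := Hm _ h3.
have := Hd _ h1; have := Hd _ h2; have := Hd _ h3.
have := He _ h1; have := He _ h2; have := He _ h3.
move=> /= -> -> -> -> -> -> -> -> ->.
ring.
Qed.
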